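(* Let $n,a,b$ be nonnegative integers with $n\ge a+b+5$ and $b\ge 2$. Then the graph $F_n(a,b)$ is $K_4^-$-saturated.
   Context: All graphs are finite and simple. $K_4^-$ denotes the graph obtained from $K_4$ by deleting one edge. A graph $G$ is $K_4^-$-saturated if $G$ contains no copy of $K_4^-$ but for every pair of nonadjacent vertices $u,v$ of $G$, $G+uv$ contains a copy of $K_4^-$. For nonnegative integers $n,a,b$ with $n\ge a+b+5$, the graph $F_n(a,b)$ is defined as follows. Its vertex set is the disjoint union $I\cup A_1\cup A_2\cup B_1\cup B_2\cup C$, where $I=\{x\}$, $A_1=\{u_1,u_2\}$, $B_1=\{v_1,v_2\}$, $|A_2|=a$, $|B_2|=b$, $|C|=n-a-b-5$ (so it has $n$ vertices). Its edges are: all pairs between $A_1\cup A_2\cup C$ and $B_2$; all pairs between $A_2$ and $B_1$; all pairs between $x$ and $A_1\cup B_1\cup C$; and the two edges $u_1v_1$ and $u_2v_2$. There are no other edges. *)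

(* Defs.v *)
From mathcomp Require Import all_boot.
Set Implicit Arguments. Unset Strict Implicit. Unset Printing Implicit Defensive.

(* A finite simple graph is a symmetric irreflexive relation e : rel T on a finType T. *)

Definition has_K4minus (T : finType) (e : rel T) : Prop :=
  exists p q r s : T,
    [/\ uniq [:: p; q; r; s],
        [&& e p q, e p r & e p s] & e q r && e q s].

Definition add_edge (T : finType) (e : rel T) (u v : T) : rel T :=
  fun x y => [|| e x y, (x == u) && (y == v) | (x == v) && (y == u)].

Definition K4minus_saturated (T : finType) (e : rel T) : Prop :=
  ~ has_K4minus e /\
  forall u v : T, u != v -> ~~ e u v -> has_K4minus (add_edge e u v).

(* The graph F_n(a,b) on vertex set 'I_n. Vertices are numbered:
   0 = x (part I), 1 = u1, 2 = u2 (A1), 3 = v1, 4 = v2 (B1),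
   [5, 5+a) = A2, [5+a, 5+a+b) = B2, [5+a+b, n) = C. *)
Inductive Fpart := PI | PA1 | PB1 | PA2 | PB2 | PC.

Definition Fpart_of (a b i : nat) : Fpart :=
  if i == 0 then PI
  else if i < 3 then PA1
  else if i < 5 then PB1
  else if i < 5 + a then PA2
  else if i < 5 + a + b then PB2
  else PC.

Definition inA1A2C (p : Fpart) : bool :=
  match p with PA1 | PA2 | PC => true | _ => false end.
Definition isB2 (p : Fpart) : bool := if p is PB2 then true else false.
Definition isA2 (p : Fpart) : bool := if p is PA2 then true else false.
Definition isB1 (p : Fpart) : bool := if p is PB1 then true else false.
Definition isI (p : Fpart) : bool := if p is PI then true else false.
Definition inA1B1C (p : Fpart) : bool :=
  match p with PA1 | PB1 | PC => true | _ => false end.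

Definition F_edge_dir (a b i j : nat) : bool :=
  let pi := Fpart_of a b i in
  let pj := Fpart_of a b j in
  [|| inA1A2C pi && isB2 pj,
      isA2 pi && isB1 pj,
      isI pi && inA1B1C pj,
      (i == 1) && (j == 3)
    | (i == 2) && (j == 4)].

Definition F_graph (n a b : nat) : rel 'I_n :=
  fun i j => F_edge_dir a b i j || F_edge_dir a b j i.
Arguments F_graph : clear implicits.

(* Main.v *)
Require Import Defs.
From mathcomp Require Import all_boot zify.

Definition cls (a b i : nat) : nat :=
  if i < 5 then i else if i < 5 + a then 5 else if i < 5 + a + b then 6 else 7.

Lemma cls_lt8 a b i : cls a b i < 8.
Proof. rewrite /cls; repeat case: ifP => //; lia. Qed.

Lemma Fpart_cls a b i : Fpart_of a b i = Fpart_of 1 1 (cls a b i).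
Proof.
rewrite /cls; case: (ltnP i 5) => h.
  by case: i h => [|[|[|[|[|i]]]]].
have h1 : (i == 0) = false by lia.
have h2 : (i < 3) = false by lia.
have h3 : (i < 5) = false by lia.
rewrite /Fpart_of h1 h2 h3 /=.
by case: ifP => // _; case: ifP.
Qed.

Lemma cls_eq_small a b i k : k < 5 -> (cls a b i == k) = (i == k).
Proof. rewrite /cls => hk; repeat case: ifP => //; lia. Qed.

Lemma edge_cls a b i j : F_edge_dir a b i j = F_edge_dir 1 1 (cls a b i) (cls a b j).
Proof. by rewrite /F_edge_dir (Fpart_cls a b i) (Fpart_cls a b j) !cls_eq_small. Qed.

Definition Q (c d : nat) := F_edge_dir 1 1 c d || F_edge_dir 1 1 d c.

Definition check1 :=
  all (fun p => all (fun q => all (fun r => all (fun s =>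
    [&& Q p q, Q p r, Q p s, Q q r & Q q s] ==> (r == s) && (r < 5))
   (iota 0 8)) (iota 0 8)) (iota 0 8)) (iota 0 8).

Lemma check1_ok : check1. Proof. by vm_compute. Qed.

Definition sc (cu cv s : nat) := match s with 0 => cu | 1 => cv | 7 => 6 | 8 => 6 | k => k - 2 end.
Definition dist cu cv s t :=
  (s != t) && [|| sc cu cv s != sc cu cv t, (s + t == 1) | (s + t == 15) && (s != 0)].
Definition symE cu cv s t := ((s == 0) && (t == 1)) || ((s == 1) && (t == 0)) || Q (sc cu cv s) (sc cu cv t).
Definition okt cu cv (t : nat * nat * nat * nat) :=
  let: (p, q, r, s) := t in
  [&& p < 9, q < 9, r < 9, s < 9, dist cu cv p q, dist cu cv p r, dist cu cv p s, dist cu cv q r, dist cu cv q s, dist cu cv r s,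
      symE cu cv p q, symE cu cv p r, symE cu cv p s & symE cu cv q r && symE cu cv q s].
Definition syms := iota 0 9.
Definition tuples := flatten (map (fun p => flatten (map (fun q => flatten (map (fun r => map (fun s => (p, q, r, s)) syms) syms)) syms)) syms).
Definition check2 :=
  all (fun cu => all (fun cv => (~~ Q cu cv && ((cu != cv) || (4 < cu))) ==> has (okt cu cv) tuples)
   (iota 0 8)) (iota 0 8).
Lemma check2_ok : check2. Proof. by vm_compute. Qed.

Lemma FQ n a b (i j : 'I_n) : F_graph n a b i j = Q (cls a b i) (cls a b j).
Proof. by rewrite /F_graph /Q (edge_cls a b i j) (edge_cls a b j i). Qed.

Lemma cls_small a b i : cls a b i < 5 -> cls a b i = i.
Proof. by rewrite /cls; case: ifP => // _; repeat case: ifP. Qed.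

Lemma in8 a b i : cls a b i \in iota 0 8.
Proof. by rewrite mem_iota cls_lt8. Qed.

Theorem lemma2p2 (n a b : nat) :
  a + b + 5 <= n -> 2 <= b -> K4minus_saturated (F_graph n a b).
Proof.
case: n => [|n] hn hb; first lia.
split.
  case=> p [q [r [s [hu /and3P[hpq hpr hps] /andP[hqr hqs]]]]].
  rewrite !FQ in hpq hpr hps hqr hqs.
  have := check1_ok.
  move/allP/(_ _ (in8 a b p))/allP/(_ _ (in8 a b q))/allP/(_ _ (in8 a b r))/allP/(_ _ (in8 a b s)).
  rewrite hpq hpr hps hqr hqs /= => /andP[/eqP ers hr5].
  have e : r = s.
    apply: val_inj => /=.
    have h1 := cls_small _ _ _ hr5.
    have h2 : cls a b s < 5 by rewrite -ers.
    have h2' := cls_small _ _ _ h2.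
    by rewrite -h1 -h2' ers.
  move: hu; rewrite e /= !inE eqxx.
  by rewrite !(orbT, andbF, andbT).
move=> u v huv hnuv.
set cu := cls a b u; set cv := cls a b v.
have hc : ~~ Q cu cv && ((cu != cv) || (4 < cu)).
  rewrite -FQ hnuv /=.
  case: (ltnP 4 cu) => h; first by rewrite orbT.
  rewrite orbF; apply/eqP => e.
  have h1 : cu = u by apply: cls_small; lia.
  have h2 : cv = v by apply: cls_small; rewrite -/cv -e; lia.
  have e2 : u = v by apply: val_inj => /=; lia.
  by rewrite e2 eqxx in huv.
have := check2_ok.
move/allP/(_ _ (in8 a b u))/allP/(_ _ (in8 a b v)).
rewrite -/cu -/cv hc implyTb => /hasP [[[[p q] r] s] _].
pose sv (k : nat) : 'I_n.+1 :=
  match k with 0 => u | 1 => v | 7 => inord (5 + a) | 8 => inord (6 + a) | k => inord (k - 2) end.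
have svc k : k < 9 -> cls a b (sv k) = sc cu cv k.
  case: k => [|[|[|[|[|[|[|[|[|k]]]]]]]]] //= _; rewrite inordK; try lia;
  rewrite /cls /=; repeat case: ifP => //; lia.
have svd k l : k < 9 -> l < 9 -> dist cu cv k l -> sv k != sv l.
  move=> hk hl /andP[hkl /or3P[h|h|/andP[h h']]].
  - apply: contra h => /eqP e. by rewrite -svc // -(svc l) // e.
  - have : (k == 0) && (l == 1) || (k == 1) && (l == 0) by lia.
    by case/orP=> /andP[/eqP -> /eqP ->] //; rewrite eq_sym.
  - have : (k == 7) && (l == 8) || (k == 8) && (l == 7) by lia.
    case/orP=> /andP[/eqP -> /eqP ->] /=; apply/eqP => /(congr1 val);
    rewrite /= !inordK; lia.
have sve k l : k < 9 -> l < 9 -> symE cu cv k l -> add_edge (F_graph n.+1 a b) u v (sv k) (sv l).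
  move=> hk hl /orP[/orP[/andP[/eqP -> /eqP ->]|/andP[/eqP -> /eqP ->]]|h].
  - by rewrite /add_edge /= !eqxx orbT.
  - by rewrite /add_edge /= !eqxx !orbT.
  - by rewrite /add_edge FQ !svc // h.
rewrite /okt; case/and5P=> hp hq hr hs /and5P[d1 d2 d3 d4 /and5P[d5 d6 e1 e2 /andP[e3 /andP[e4 e5]]]].
exists (sv p), (sv q), (sv r), (sv s); split.
- by rewrite /= !inE !negb_or !svd.
- by rewrite !sve.
- by rewrite !sve.
Qed.
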